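(* Let $n\ne0,-1$, let $r$ be a constant and $\xi(x)$ a nonvanishing smooth function, and set $p=4(1+\frac1n)^2r^2$. Then for arbitrary constants $c_1,c_2$, the function $u(t,x)=\varphi(\omega)|\xi|^{\frac1{2n+2}}\exp\big(\frac rn\int\frac{dx}{\xi}\big)$, $\omega=t-\int\frac{dx}{\xi}$, where $\varphi$ is defined implicitly by $$\int\frac{n(\varphi^n-1)}{2r\varphi^{n+1}+c_1}\,d\varphi=\omega+c_2,$$ is a solution of $$|\xi|^{-\frac{3n+4}{2n+2}}\exp\Big(r\int\frac{dx}{\xi}\Big)u_{tt}-(u^nu_x)_x-\frac{\xi_x^2-2\xi\xi_{xx}-p}{4(n+1)\xi^2}u^{n+1}=0.$$
   Context: Here $\int dx/\xi$ denotes a fixed antiderivative of $1/\xi$. *)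

(* Defs.v *)
From Stdlib Require Import Reals.
Open Scope R_scope.

Definition smooth (f : R -> R) : Prop :=
  exists D : nat -> R -> R,
    D 0%nat = f /\ forall (k : nat) (x : R), derivable_pt_lim (D k) x (D (S k) x).

(* Main.v *)
Require Import Defs.
From Stdlib Require Import Reals Lra.
Open Scope R_scope.

Lemma Deq f x l l' : derivable_pt_lim f x l -> l = l' -> derivable_pt_lim f x l'.
Proof. intros H ->; exact H. Qed.
Lemma Dmult f g x df dg : derivable_pt_lim f x df -> derivable_pt_lim g x dg ->
  derivable_pt_lim (fun y => f y * g y) x (df * g x + f x * dg).
Proof. intros; exact (derivable_pt_lim_mult f g x df dg H H0). Qed.
Lemma Dplus f g x df dg : derivable_pt_lim f x df -> derivable_pt_lim g x dg ->
  derivable_pt_lim (fun y => f y + g y) x (df + dg).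
Proof. intros; exact (derivable_pt_lim_plus f g x df dg H H0). Qed.
Lemma Dminus f g x df dg : derivable_pt_lim f x df -> derivable_pt_lim g x dg ->
  derivable_pt_lim (fun y => f y - g y) x (df - dg).
Proof. intros; exact (derivable_pt_lim_minus f g x df dg H H0). Qed.
Lemma Dconst c x : derivable_pt_lim (fun _ => c) x 0.
Proof. exact (derivable_pt_lim_const c x). Qed.
Lemma Did x : derivable_pt_lim (fun y => y) x 1.
Proof. exact (derivable_pt_lim_id x). Qed.
Lemma Dcomp f g x df dg : derivable_pt_lim g x dg -> derivable_pt_lim f (g x) df ->
  derivable_pt_lim (fun y => f (g y)) x (df * dg).
Proof. intros; exact (derivable_pt_lim_comp g f x dg df H H0). Qed.
Lemma Dexp f x df : derivable_pt_lim f x df ->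
  derivable_pt_lim (fun y => exp (f y)) x (exp (f x) * df).
Proof. intros; apply (Dcomp exp f); auto; apply derivable_pt_lim_exp. Qed.
Lemma Ddiv f g x df dg : derivable_pt_lim f x df -> derivable_pt_lim g x dg -> g x <> 0 ->
  derivable_pt_lim (fun y => f y / g y) x ((df * g x - dg * f x) / (g x)²).
Proof. intros; exact (derivable_pt_lim_div f g x df dg H H0 H1). Qed.
Lemma Dinv f x df : derivable_pt_lim f x df -> f x <> 0 ->
  derivable_pt_lim (fun y => / f y) x (- df / (f x)^2).
Proof. intros. replace (fun y => / f y) with (fun y => 1 / f y).
  2:{ apply FunctionalExtensionality.functional_extensionality; intro; unfold Rdiv; ring. }
  eapply Deq. { apply (Ddiv (fun _ => 1) f); [apply Dconst|exact H|exact H0]. }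
  unfold Rsqr; field; auto. Qed.
Lemma Drpow f x df c : derivable_pt_lim f x df -> 0 < f x ->
  derivable_pt_lim (fun y => Rpower (f y) c) x (c * Rpower (f x) (c - 1) * df).
Proof. intros. apply (Dcomp (fun z => Rpower z c) f); auto. apply derivable_pt_lim_power; auto. Qed.
Lemma Dlnabs f x df : derivable_pt_lim f x df -> f x <> 0 ->
  derivable_pt_lim (fun y => ln (Rabs (f y))) x (df / f x).
Proof. intros. destruct (Rlt_or_le 0 (f x)).
 - eapply Deq. apply (Dcomp ln (fun y => Rabs (f y))).
   apply (Dcomp Rabs f); [exact H| apply Rabs_derive_1; auto].
   apply derivable_pt_lim_ln. apply Rabs_pos_lt; auto.
   rewrite Rabs_right by lra. field; auto.
 - eapply Deq. apply (Dcomp ln (fun y => Rabs (f y))).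
   apply (Dcomp Rabs f); [exact H| apply Rabs_derive_2; lra].
   apply derivable_pt_lim_ln. apply Rabs_pos_lt; auto.
   rewrite Rabs_left by lra. field; auto.
Qed.
Lemma Dabspow f x df c : derivable_pt_lim f x df -> f x <> 0 ->
  derivable_pt_lim (fun y => Rpower (Rabs (f y)) c) x (c * df / f x * Rpower (Rabs (f x)) c).
Proof. intros. unfold Rpower. eapply Deq. apply Dexp. apply (Dmult (fun _ => c)).
  apply Dconst. apply Dlnabs; [exact H|exact H0]. unfold Rpower. field; auto. Qed.
Lemma Dloc f g x l d : 0 < d -> (forall y, Rabs (y - x) < d -> f y = g y) ->
  derivable_pt_lim f x l -> derivable_pt_lim g x l.
Proof. intros Hd He H eps He0. destruct (H eps He0) as [del Hdel].
  assert (0 < Rmin del d) by (apply Rmin_pos; [apply cond_pos|lra]).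
  exists (mkposreal _ H0). intros h Hh0 Hh. simpl in Hh.
  rewrite <- !He. apply Hdel; auto. eapply Rlt_le_trans; [exact Hh| apply Rmin_l].
  rewrite Rminus_diag, Rabs_R0; lra.
  replace (x + h - x) with h by ring. eapply Rlt_le_trans; [exact Hh| apply Rmin_r].
Qed.
Lemma Dopp f x df : derivable_pt_lim f x df -> derivable_pt_lim (fun y => - f y) x (- df).
Proof. intros; exact (derivable_pt_lim_opp f x df H). Qed.
Lemma rp_plus1 U c : 0 < U -> Rpower U (c+1) = Rpower U c * U.
Proof. intros. rewrite Rpower_plus, Rpower_1; auto. Qed.
Lemma rp_minus1 U c : 0 < U -> Rpower U (c-1) = Rpower U c / U.
Proof. intros. unfold Rminus. rewrite Rpower_plus, Rpower_Ropp, Rpower_1; auto. Qed.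
Lemma rp_pos U c : 0 < Rpower U c.
Proof. unfold Rpower; apply exp_pos. Qed.

Definition hh n r c1 P := (2*r*Rpower P (n+1)+c1)/(n*(Rpower P n - 1)).
Definition hd n r c1 P := (2*r*(n+1)*Rpower P n * (n*(Rpower P n - 1))
   - n*(n*Rpower P (n-1)) * (2*r*Rpower P (n+1)+c1)) / (n*(Rpower P n - 1))^2.

Lemma phi_der (n r c1 c2 : R) (G phi : R -> R) (Om : R -> Prop)
  (hOm : open_set Om)
  (hphi_pos : forall w, Om w -> 0 < phi w)
  (hphi_der : forall w, Om w -> derivable_pt phi w)
  (hden : forall w, Om w -> 2 * r * Rpower (phi w) (n + 1) + c1 <> 0)
  (hG : forall w, Om w ->
     derivable_pt_lim G (phi w)
       (n * (Rpower (phi w) n - 1) / (2 * r * Rpower (phi w) (n + 1) + c1)))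
  (himp : forall w, Om w -> G (phi w) = w + c2) w (Hw : Om w) :
  derivable_pt_lim phi w (hh n r c1 (phi w)) /\ Rpower (phi w) n - 1 <> 0.
Proof.
  destruct (hphi_der w Hw) as [l Hl].
  pose proof (Dcomp G phi w _ _ Hl (hG w Hw)) as H1.
  destruct (hOm w Hw) as [del Hdel].
  assert (H2 : derivable_pt_lim (fun v => G (phi v)) w 1).
  { apply (Dloc (fun v => v + c2) _ w 1 del). apply cond_pos.
    intros y Hy. symmetry. apply himp. apply Hdel. exact Hy.
    eapply Deq. apply Dplus. apply Did. apply Dconst. ring. }
  pose proof (uniqueness_limite _ _ _ _ H1 H2) as E.
  pose proof (hden w Hw) as HN.
  assert (HA : Rpower (phi w) n - 1 <> 0).
  { intro HA. rewrite HA in E. unfold Rdiv in E. rewrite Rmult_0_r, !Rmult_0_l in E. lra. }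
  split; auto.
  unfold hh. replace l with ((2 * r * Rpower (phi w) (n + 1) + c1) / (n * (Rpower (phi w) n - 1))) in Hl; auto.
  assert (n <> 0). { intro Hn. rewrite Hn in E. unfold Rdiv in E. rewrite !Rmult_0_l in E. lra. }
  apply (Rmult_eq_reg_l (n * (Rpower (phi w) n - 1) / (2 * r * Rpower (phi w) (n + 1) + c1))).
  rewrite E. field. auto.
  unfold Rdiv. apply Rmult_integral_contrapositive; split. apply Rmult_integral_contrapositive; auto.
  apply Rinv_neq_0_compat; auto.
Qed.

Lemma hh_der n r c1 P : 0 < P -> n * (Rpower P n - 1) <> 0 ->
  derivable_pt_lim (hh n r c1) P (hd n r c1 P).
Proof. intros HP HA. unfold hh.
  eapply Deq. apply (Ddiv (fun P => 2*r*Rpower P (n+1)+c1) (fun P => n*(Rpower P n - 1))).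
  - apply Dplus. apply (Dmult (fun _ => 2*r)). apply Dconst. apply (Drpow (fun P => P)). apply Did. auto. apply Dconst.
  - apply (Dmult (fun _ => n)). apply Dconst. apply Dminus. apply (Drpow (fun P => P)). apply Did. auto. apply Dconst.
  - auto.
  - unfold hd. replace (n+1-1) with n by ring. unfold Rsqr. field. auto.
    split; intro Z; apply HA; rewrite Z; ring.
Qed.

Theorem mainTheorem7
  (n r c1 c2 : R) (xi xi' xi'' F G phi : R -> R) (Om : R -> Prop)
  (hn0 : n <> 0) (hn1 : n <> -1)
  (hxi_smooth : smooth xi)
  (hxi' : forall x, derivable_pt_lim xi x (xi' x))
  (hxi'' : forall x, derivable_pt_lim xi' x (xi'' x))
  (hxi_nz : forall x, xi x <> 0)
  (hF : forall x, derivable_pt_lim F x (/ xi x))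
  (hOm : open_set Om)
  (hphi_pos : forall w, Om w -> 0 < phi w)
  (hphi_der : forall w, Om w -> derivable_pt phi w)
  (hden : forall w, Om w -> 2 * r * Rpower (phi w) (n + 1) + c1 <> 0)
  (hG : forall w, Om w ->
     derivable_pt_lim G (phi w)
       (n * (Rpower (phi w) n - 1) / (2 * r * Rpower (phi w) (n + 1) + c1)))
  (himp : forall w, Om w -> G (phi w) = w + c2) :
  let p := 4 * (1 + / n) ^ 2 * r ^ 2 in
  let u := fun t x =>
    phi (t - F x) * Rpower (Rabs (xi x)) (/ (2 * n + 2)) * exp (r / n * F x) in
  exists Ut Utt Ux : R -> R -> R,
    (forall t x, Om (t - F x) ->
       derivable_pt_lim (fun s => u s x) t (Ut t x) /\
       derivable_pt_lim (fun s => Ut s x) t (Utt t x) /\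
       derivable_pt_lim (fun y => u t y) x (Ux t x)) /\
    (forall t x, Om (t - F x) ->
       exists Wx : R,
         derivable_pt_lim (fun y => Rpower (u t y) n * Ux t y) x Wx /\
         Rpower (Rabs (xi x)) (- ((3 * n + 4) / (2 * n + 2))) * exp (r * F x) * Utt t x
         - Wx
         - (xi' x ^ 2 - 2 * xi x * xi'' x - p) / (4 * (n + 1) * xi x ^ 2)
             * Rpower (u t x) (n + 1) = 0).
Proof.
  intros p u.
  pose proof (phi_der n r c1 c2 G phi Om hOm hphi_pos hphi_der hden hG himp) as HP.
  set (a := / (2 * n + 2)) in u |- *.
  set (d1 := fun w => hh n r c1 (phi w)).
  set (d2 := fun w => hd n r c1 (phi w) * hh n r c1 (phi w)).
  assert (Hd1 : forall w, Om w -> derivable_pt_lim d1 w (d2 w)).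
  { intros w Hw. destruct (HP w Hw) as [H1 H2]. unfold d1, d2.
    apply (Dcomp (hh n r c1) phi). exact H1. apply hh_der. auto.
    intro Z; apply Rmult_integral in Z; destruct Z; auto. }
  set (K := fun y => Rpower (Rabs (xi y)) a * exp (r / n * F y)).
  set (Ux := fun t y => d1 (t - F y) * (- / xi y) * K y + phi (t - F y) * (K y * ((a * xi' y + r/n) / xi y))).
  assert (HK : forall x, derivable_pt_lim K x (K x * ((a * xi' x + r/n) / xi x))).
  { intro x. unfold K. eapply Deq. apply Dmult. apply Dabspow. apply hxi'. apply hxi_nz.
    apply Dexp. apply (Dmult (fun _ => r/n)). apply Dconst. apply hF.
    cbv beta. field. auto. }
  assert (HUx : forall t x, Om (t - F x) -> derivable_pt_lim (fun y => u t y) x (Ux t x)).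
  { intros t x Hw. unfold u, Ux.
    eapply Deq. apply Dmult. apply Dmult.
    apply (Dcomp phi (fun y => t - F y)). apply Dminus. apply Dconst. apply hF.
    apply HP; auto. apply Dabspow. apply hxi'. apply hxi_nz.
    apply Dexp. apply (Dmult (fun _ => r/n)). apply Dconst. apply hF.
    unfold d1, K. cbv beta. field. auto. }
  exists (fun t x => d1 (t - F x) * Rpower (Rabs (xi x)) a * exp (r/n*F x)),
    (fun t x => d2 (t - F x) * Rpower (Rabs (xi x)) a * exp (r/n*F x)), Ux.
  split.
  - intros t x Hw. split; [|split].
    + unfold u. eapply Deq. apply Dmult. apply Dmult.
      apply (Dcomp phi (fun s => s - F x)). apply Dminus. apply Did. apply Dconst.
      apply HP; auto. apply Dconst. apply Dconst. unfold d1. cbv beta. ring.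
    + eapply Deq. apply Dmult. apply Dmult.
      apply (Dcomp d1 (fun s => s - F x)). apply Dminus. apply Did. apply Dconst.
      apply Hd1; auto. apply Dconst. apply Dconst. cbv beta. ring.
    + apply HUx; auto.
  - intros t x Hw. destruct (HP _ Hw) as [Hphi HA].
    assert (Hu : 0 < u t x).
    { unfold u. apply Rmult_lt_0_compat. apply Rmult_lt_0_compat. auto. apply rp_pos. apply exp_pos. }
    eexists; split.
    { apply Dmult. apply (Drpow (fun y => u t y)). apply HUx; auto. auto.
      unfold Ux. apply Dplus. apply Dmult. apply Dmult.
      apply (Dcomp d1 (fun y => t - F y)). apply Dminus. apply Dconst. apply hF. apply Hd1; auto.
      apply (Dopp (fun y => / xi y)). apply Dinv. apply hxi'. apply hxi_nz. apply HK.
      apply Dmult. apply (Dcomp phi (fun y => t - F y)). apply Dminus. apply Dconst. apply hF. apply Hphi.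
      apply Dmult. apply HK. apply Ddiv. apply Dplus. apply (Dmult (fun _ => a)). apply Dconst. apply hxi''.
      apply Dconst. apply hxi'. apply hxi_nz. }
    cbv beta. rewrite rp_minus1, rp_plus1 by auto.
    assert (HXp : 0 < Rabs (xi x)) by (apply Rabs_pos_lt; auto).
    assert (HU : Rpower (u t x) n = Rpower (phi (t - F x)) n * Rpower (Rabs (xi x)) (a*n) * exp (r * F x)).
    { unfold u. rewrite <- (Rpower_mult_distr (phi (t - F x) * Rpower (Rabs (xi x)) a)).
      2:{ apply Rmult_lt_0_compat; auto. apply rp_pos. } 2: apply exp_pos.
      rewrite <- (Rpower_mult_distr (phi (t - F x))); auto. 2: apply rp_pos.
      rewrite Rpower_mult.
      unfold Rpower at 3. rewrite ln_exp. f_equal. f_equal. field. auto. }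
    assert (HX : Rpower (Rabs (xi x)) (- ((3 * n + 4) / (2 * n + 2))) = Rpower (Rabs (xi x)) (a*n) / xi x ^ 2).
    { replace (- ((3 * n + 4) / (2 * n + 2))) with (a * n + - INR 2).
      rewrite Rpower_plus, Rpower_Ropp, Rpower_pow, pow2_abs by auto.
      auto. unfold a; simpl. field. intro Z. apply hn1. lra. }
    rewrite HU, HX.
    unfold Ux, K, d1, d2, hh, hd. rewrite rp_minus1, rp_plus1 by auto.
    unfold u, p, a.
    set (P := phi (t - F x)). set (Pn := Rpower P n). set (T := Rpower (Rabs (xi x)) (/ (2 * n + 2) * n)).
    set (S := Rpower (Rabs (xi x)) (/ (2 * n + 2))).
    set (E := exp (r / n * F x)). set (Er := exp (r * F x)).
    assert (0 < S) by apply rp_pos. assert (0 < E) by apply exp_pos. assert (0 < P) by (unfold P; auto).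
    pose proof (hxi_nz x).
    unfold Rsqr. field.
    repeat split; try lra; auto; intro Z; apply hn1; lra.
Qed.
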